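(* Let $H,K$ be $n$-Hilbert spaces, fix $a_2,\dots,a_n\in H$, $b_2,\dots,b_n\in K$, $C_1\in\mathcal{GB}(H_F)$, $C_2\in\mathcal{GB}(K_G)$. Let $\{f_i\}_{i=1}^\infty$ be a $C_1$-controlled frame associated to $(a_2,\dots,a_n)$ for $H$ with bounds $A,B$ and $\{g_j\}_{j=1}^\infty$ a $C_2$-controlled frame associated to $(b_2,\dots,b_n)$ for $K$ with bounds $C,D$, with frame operators $S_{C_1}$, $S_{C_2}$. Then $AC\,I_{F\otimes G}\le S_{C_1\otimes C_2}\le BD\,I_{F\otimes G}$, where $I_{F\otimes G}$ is the identity on $H_F\otimes K_G$ and $S_{C_1\otimes C_2}$ is the frame operator of $\{f_i\otimes g_j\}_{i,j=1}^\infty$.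
   Context: Let $n\ge2$. For a complex $n$-Hilbert space $H$ with $n$-inner product $\langle\cdot,\cdot|\cdot,\dots,\cdot\rangle_1$ and $n$-norm $\|x_1,\dots,x_n\|_1=\langle x_1,x_1|x_2,\dots,x_n\rangle_1^{1/2}$, and fixed $a_2,\dots,a_n\in H$, $F=\{a_2,\dots,a_n\}$: $\langle x,y\rangle_F=\langle x,y|a_2,\dots,a_n\rangle_1$ is a semi-inner product on $H$ inducing an inner product on $H/L_F$ ($L_F=\mathrm{span}\,F$); identifying $H/L_F$ with an algebraic complement of $L_F$, $H_F$ is its Hilbert completion, with norm written $\|f,a_2,\dots,a_n\|_1$. Likewise $K$ with $\langle\cdot,\cdot|\cdot,\dots,\cdot\rangle_2$, $G=\{b_2,\dots,b_n\}$, Hilbert space $K_G$. $H\otimes K$ carries the $n$-inner product $\langle f_1\otimes g_1,f_2\otimes g_2|f_3\otimes g_3,\dots,f_n\otimes g_n\rangle=\langle f_1,f_2|f_3,\dots,f_n\rangle_1\langle g_1,g_2|g_3,\dots,g_n\rangle_2$; $H_F\otimes K_G$ is the Hilbert tensor product and $(Q\otimes T)(f\otimes g)=Qf\otimes Tg$. $\mathcal{GB}(\cdot)$: bounded operators with bounded inverse; $\le$ between self-adjoint operators means $\langle Tx,x\rangle\le\langle Sx,x\rangle$ for all $x$. For $C\in\mathcal{GB}(H_F)$, $\{f_i\}\subseteq H$ is a $C$-controlled frame associated to $(a_2,\dots,a_n)$ for $H$ with bounds $A,B$ if $A\|f,a_2,\dots,a_n\|_1^2\le\sum_i\langle f,f_i|a_2,\dots,a_n\rangle_1\langle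 Cf_i,f|a_2,\dots,a_n\rangle_1\le B\|f,a_2,\dots,a_n\|_1^2$ for all $f\in H_F$; its frame operator is $S_Cf=\sum_i\langle f,f_i|a_2,\dots,a_n\rangle_1Cf_i$ (similarly for $K$). The frame operator of $\{f_i\otimes g_j\}$ is $S_{C_1\otimes C_2}(f\otimes g)=\sum_{i,j}\langle f\otimes g,f_i\otimes g_j|a_2\otimes b_2,\dots,a_n\otimes b_n\rangle(C_1\otimes C_2)(f_i\otimes g_j)$. *)

(* Defs.v *)
From HB Require Import structures.
From mathcomp Require Import all_boot all_order all_algebra.
From mathcomp Require Import fingroup perm.
From mathcomp Require Import reals complex.
Set Implicit Arguments. Unset Strict Implicit. Unset Printing Implicit Defensive.
Import Order.TTheory GRing.Theory Num.Theory.
Local Open Scope ring_scope.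
Local Open Scope complex_scope.

Section Defs.
Variable R : realType.
Local Notation C := R[i].

(* n-inner product spaces, with n = m.+1 (so the "tail" a_2,...,a_n is an  *)
(* m-tuple).  ip x y z = <x, y | z_1, ..., z_m>.                           *)
Section NInner.
Variables (m : nat) (H : lmodType C) (ip : H -> H -> m.-tuple H -> C).

Definition nsq (v : m.+1.-tuple H) : C := ip (thead v) (thead v) (behead_tuple v).

Definition lin_dependent k (v : k.-tuple H) : Prop :=
  exists c : 'I_k -> C, (exists i, c i != 0) /\ \sum_(i < k) c i *: tnth v i = 0.

Definition is_n_inner_product : Prop :=
  [/\ forall v : m.+1.-tuple H, 0 <= nsq v /\ (nsq v = 0 <-> lin_dependent v),
      forall (v : m.+1.-tuple H) (s : 'S_m.+1),
                   nsq v = nsq [tuple tnth v (s i) | i < m.+1],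
      forall x y z, ip x y z = (ip y x z)^*,
      forall (a : C) x y z, ip (a *: x) y z = a * ip x y z &
      forall x x' y z, ip (x + x') y z = ip x y z + ip x' y z].

Definition nnorm (x : H) (z : m.-tuple H) : C := sqrtC (ip x x z).

Definition n_complete : Prop :=
  forall u : nat -> H,
    (forall z e, 0 < e -> exists N, forall k l, (N <= k)%N -> (N <= l)%N ->
                          nnorm (u k - u l) z < e) ->
    exists x, forall z e, 0 < e -> exists N, forall k, (N <= k)%N ->
                          nnorm (u k - x) z < e.

Definition n_hilbert : Prop := is_n_inner_product /\ n_complete.
End NInner.

Section Hilbert.
Variables (V : lmodType C) (ip : V -> V -> C).

Definition hnorm (x : V) : C := sqrtC (ip x x).

Definition vconv (u : nat -> V) (l : V) : Prop :=
  forall e, 0 < e -> exists N, forall k, (N <= k)%N -> hnorm (u k - l) < e.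

Definition hilbert : Prop :=
  [/\ forall (a : C) x y z, ip (a *: x + y) z = a * ip x z + ip y z,
      forall x y, ip x y = (ip y x)^*,
      forall x, 0 <= ip x x,
      forall x, ip x x = 0 -> x = 0 &
      forall u : nat -> V,
        (forall e, 0 < e -> exists N, forall k l, (N <= k)%N -> (N <= l)%N ->
                   hnorm (u k - u l) < e) ->
        exists x, vconv u x].

Definition linear_op (T : V -> V) : Prop :=
  forall (a : C) x y, T (a *: x + y) = a *: T x + T y.

Definition bounded_op (T : V -> V) : Prop :=
  exists M : R, forall x, hnorm (T x) <= M%:C * hnorm x.

Definition GB (T : V -> V) : Prop :=
  linear_op T /\ bounded_op T /\
  exists T' : V -> V, [/\ cancel T T', cancel T' T & bounded_op T'].
End Hilbert.

Definition cconv (u : nat -> C) (s : C) : Prop :=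
  forall e, 0 < e -> exists N, forall k, (N <= k)%N -> `|u k - s| < e.

(* H_F : the Hilbert completion of (H / L_F, <.,.>_F), given (up to        *)
(* unitary isomorphism) by an inner-product-preserving linear map with     *)
(* dense range  j : H -> H_F  (j x is the class of x).                     *)
Definition completion_of m (H : lmodType C) (ipH : H -> H -> m.-tuple H -> C)
  (a : m.-tuple H) (HF : lmodType C) (ipF : HF -> HF -> C) (j : H -> HF) : Prop :=
  [/\ hilbert ipF,
      forall (c : C) x y, j (c *: x + y) = c *: j x + j y,
      forall x y, ipF (j x) (j y) = ipH x y a &
      forall v e, 0 < e -> exists x, hnorm ipF (v - j x) < e].

Definition hilbert_tensor (HF : lmodType C) (ipF : HF -> HF -> C)
  (KG : lmodType C) (ipG : KG -> KG -> C)
  (W : lmodType C) (ipW : W -> W -> C) (t : HF -> KG -> W) : Prop :=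
  [/\ hilbert ipW,
      forall (c : C) x x' y, t (c *: x + x') y = c *: t x y + t x' y,
      forall (c : C) x y y', t x (c *: y + y') = c *: t x y + t x y',
      forall x x' y y', ipW (t x y) (t x' y') = ipF x x' * ipG y y' &
      forall w e, 0 < e -> exists k (xs : 'I_k -> HF) (ys : 'I_k -> KG),
        hnorm ipW (w - \sum_(i < k) t (xs i) (ys i)) < e].

(* {f_i} is a Cop-controlled frame associated to a (encoded by j) with     *)
(* bounds A, B                                                             *)
Definition ctrl_frame (H HF : lmodType C) (ipF : HF -> HF -> C) (j : H -> HF)
  (Cop : HF -> HF) (f : nat -> H) (A B : R) : Prop :=
  [/\ 0 < A, A <= B &
      forall x : HF, exists s : C,
        [/\ cconv (fun k => \sum_(i < k) ipF x (j (f i)) * ipF (Cop (j (f i))) x) s,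
            A%:C * hnorm ipF x ^+ 2 <= s &
            s <= B%:C * hnorm ipF x ^+ 2]].

Definition frame_op (H HF : lmodType C) (ipF : HF -> HF -> C) (j : H -> HF)
  (Cop : HF -> HF) (f : nat -> H) (S : HF -> HF) : Prop :=
  forall x, vconv ipF (fun k => \sum_(i < k) ipF x (j (f i)) *: Cop (j (f i))) (S x).

Definition tensor_frame_op (H K HF KG W : lmodType C)
  (ipF : HF -> HF -> C) (ipG : KG -> KG -> C) (ipW : W -> W -> C)
  (jF : H -> HF) (jG : K -> KG) (t : HF -> KG -> W)
  (C1 : HF -> HF) (C2 : KG -> KG) (f : nat -> H) (g : nat -> K)
  (S12 : W -> W) : Prop :=
  [/\ linear_op S12, bounded_op ipW S12 &
      forall x y, exists inner : nat -> W,
        (forall i, vconv ipW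
           (fun k => \sum_(l < k) ipW (t x y) (t (jF (f i)) (jG (g l)))
                        *: t (C1 (jF (f i))) (C2 (jG (g l)))) (inner i)) /\
        vconv ipW (fun k => \sum_(i < k) inner i) (S12 (t x y))].

End Defs.

(* Main.v *)
Require Import Defs.
From HB Require Import structures.
From mathcomp Require Import all_boot all_order all_algebra.
From mathcomp Require Import fingroup perm.
From mathcomp Require Import reals complex.
From mathcomp Require Import ring lra.
Import Order.TTheory GRing.Theory Num.Theory.
Local Open Scope ring_scope.
Local Open Scope complex_scope.
Set Implicit Arguments. Unset Strict Implicit. Unset Printing Implicit Defensive.

Section RealFacts.
Variable R : realType.
Implicit Types z : R[i].

Lemma ge0_realC z : 0 <= z -> z = (complex.Re z)%:C.
Proof. case: z => a b; rewrite lecE /= => /andP [/eqP b0 _]; by rewrite b0. Qed.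

Lemma CS_real (p q n : R) : 0 <= n -> 0 <= q ->
  (forall s, 0 <= p - 2 * s * n + s ^+ 2 * n * q) -> n <= p * q.
Proof.
move=> n0 q0 H.
have [q00|qp] := eqVneq q 0.
  rewrite q00 mulr0.
  have [n00|np] := eqVneq n 0; first by rewrite n00.
  have nP : 0 < n by rewrite lt_def np n0.
  have := H ((p + 1) / (2 * n)); rewrite q00 mulr0 addr0.
  have -> : 2 * ((p + 1) / (2 * n)) * n = p + 1.
    field; lra.
  lra.
have qP : 0 < q by rewrite lt_def qp q0.
have := H (q^-1).
have -> : q^-1 ^+ 2 * n * q = q^-1 * n by field.
move=> h.
have : 0 <= q * (p - 2 * q^-1 * n + q^-1 * n) by rewrite mulr_ge0 // ltW.
have -> : q * (p - 2 * q^-1 * n + q^-1 * n) = p * q - n by field.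
lra.
Qed.
End RealFacts.
Section ConjFacts.
Variable R : realType.
Lemma conjCs (s : R) (c : R[i]) : conjc (s%:C * c) = s%:C * conjc c.
Proof. case: c => a b; rewrite /=; congr Complex; ring. Qed.
End ConjFacts.
Section Form.
Variables (R : realType) (V : lmodType R[i]) (ip : V -> V -> R[i]).
Hypothesis ipl : forall (a : R[i]) x y z, ip (a *: x + y) z = a * ip x z + ip y z.
Hypothesis ipJ : forall x y, ip x y = (conjc (ip y x)).

Lemma ipDl x y z : ip (x + y) z = ip x z + ip y z.
Proof. by have := ipl 1 x y z; rewrite scale1r mul1r. Qed.

Lemma ip0l z : ip 0 z = 0.
Proof. have h := ipDl 0 0 z; rewrite addr0 in h. apply: (addrI (ip 0 z)). by rewrite addr0 -h. Qed.

Lemma ipZl a x z : ip (a *: x) z = a * ip x z.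
Proof. by have := ipl a x 0 z; rewrite addr0 ip0l addr0. Qed.

Lemma ipNl x z : ip (- x) z = - ip x z.
Proof. by rewrite -scaleN1r ipZl mulN1r. Qed.

Lemma ipBl x y z : ip (x - y) z = ip x z - ip y z.
Proof. by rewrite ipDl ipNl. Qed.

Lemma ipr a x y z : ip x (a *: y + z) = (conjc a) * ip x y + ip x z.
Proof. by rewrite ipJ ipl rmorphD rmorphM /= -!ipJ. Qed.

Lemma ipDr x y z : ip x (y + z) = ip x y + ip x z.
Proof. by rewrite ipJ ipDl rmorphD /= -!ipJ. Qed.

Lemma ip0r z : ip z 0 = 0.
Proof. by rewrite ipJ ip0l conjc0. Qed.

Lemma ipZr a x y : ip x (a *: y) = (conjc a) * ip x y.
Proof. by rewrite ipJ ipZl rmorphM /= -ipJ. Qed.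

Lemma ipNr x z : ip x (- z) = - ip x z.
Proof. by rewrite ipJ ipNl rmorphN /= -ipJ. Qed.

Lemma ipBr x y z : ip x (y - z) = ip x y - ip x z.
Proof. by rewrite ipDr ipNr. Qed.

Lemma ip_suml k (F : 'I_k -> V) z : ip (\sum_(i < k) F i) z = \sum_(i < k) ip (F i) z.
Proof. exact: (big_morph (fun x => ip x z) (fun x y => ipDl x y z) (ip0l z)). Qed.

Lemma ip_sumr k (F : 'I_k -> V) z : ip z (\sum_(i < k) F i) = \sum_(i < k) ip z (F i).
Proof. exact: (big_morph (fun x => ip z x) (fun x y => ipDr z x y) (ip0r z)). Qed.

Hypothesis ip_ge0 : forall x, 0 <= ip x x.

Lemma ge0_ex (z : R[i]) : 0 <= z -> exists2 r : R, z = r%:C & 0 <= r.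
Proof. move=> h; exists (complex.Re z); first exact: ge0_realC. by rewrite -ler0c -ge0_realC. Qed.

Lemma CS_sq x y : `|ip x y| ^+ 2 <= ip x x * ip y y.
Proof.
set c := ip x y.
have Ec : ip y x = (conjc c) by rewrite /c ipJ.
have hn : 0 <= `|c| ^+ 2 by rewrite exprn_ge0.
have Ecc : c * (conjc c) = `|c| ^+ 2 by rewrite sqr_normc.
have [p Ep p0] := ge0_ex (ip_ge0 x).
have [q Eq q0] := ge0_ex (ip_ge0 y).
have [n En n0] := ge0_ex hn.
rewrite Ep Eq En -rmorphM lecR.
apply: CS_real => // s.
have := ip_ge0 (x - (s%:C * c) *: y).
rewrite ipBl !ipBr !ipZl !ipZr Ec Ep Eq.
rewrite -/c.
have Ecs : conjc (s%:C * c) = s%:C * conjc c by apply: conjCs.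
rewrite Ecs.
have E : p%:C - s%:C*(conjc c) *c - (s%:C*c*(conjc c) - s%:C*c*(s%:C*(conjc c) *q%:C)) = p%:C - 2 * s%:C * (c*(conjc c)) + s%:C^+2 * (c * (conjc c)) * q%:C by ring.
rewrite E Ecc En -ler0c.
suff -> : (p - 2*s*n + s^+2*n*q)%:C = p%:C - 2 * s%:C * n%:C + s%:C ^+ 2 * n%:C * q%:C by [].
by apply/eqP; rewrite eq_complex /=; apply/andP; split; apply/eqP; ring.
Qed.

Lemma hn_ge0 x : 0 <= sqrtC (ip x x).
Proof. by rewrite sqrtC_ge0. Qed.

Lemma CS x y : `|ip x y| <= sqrtC (ip x x) * sqrtC (ip y y).
Proof.
rewrite -(ler_pXn2r (_ : (0 < 2)%N)) ?nnegrE ?mulr_ge0 ?hn_ge0 //.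
by rewrite exprMn !sqrtCK CS_sq.
Qed.

Lemma ip_vanish x y : ip y y = 0 -> ip x y = 0.
Proof.
move=> h; have := CS_sq x y; rewrite h mulr0.
move=> h2; have : `|ip x y| ^+ 2 == 0 by rewrite eq_le h2 exprn_ge0.
by rewrite expf_eq0 /= normr_eq0 => /eqP.
Qed.

End Form.
Section Conv.
Variable R : realType.
Local Notation C := R[i].

Lemma cconv_ext (u v : nat -> C) s : (forall k, u k = v k) -> cconv u s -> cconv v s.
Proof. move=> e h eps /h [N HN]; exists N => k /HN; by rewrite e. Qed.

Lemma half_gt0 (e : C) : 0 < e -> 0 < e / 2.
Proof. by move=> h; rewrite divr_gt0 // ltr0n. Qed.

Lemma cconv_uniq (u : nat -> C) s t : cconv u s -> cconv u t -> s = t.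
Proof.
move=> hs ht; apply/eqP; rewrite -subr_eq0.
apply/negPn/negP => nz.
have e0 : 0 < `|s - t| by rewrite normr_gt0.
have [N1 H1] := hs _ (half_gt0 e0).
have [N2 H2] := ht _ (half_gt0 e0).
have h1 := H1 (maxn N1 N2) (leq_maxl _ _).
have h2 := H2 (maxn N1 N2) (leq_maxr _ _).
have : `|s - t| < `|s - t| / 2 + `|s - t| / 2.
  apply: (le_lt_trans (y := `|u (maxn N1 N2) - s| + `|u (maxn N1 N2) - t|)).
    have -> : s - t = (u (maxn N1 N2) - t) - (u (maxn N1 N2) - s) by ring.
    by rewrite [X in _ <= X]addrC; apply: ler_normB.
  exact: ltrD.
by rewrite -splitr ltxx.
Qed.

Lemma cconv_add (u v : nat -> C) s t : cconv u s -> cconv v t ->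
  cconv (fun k => u k + v k) (s + t).
Proof.
move=> hs ht e e0.
have [N1 H1] := hs _ (half_gt0 e0).
have [N2 H2] := ht _ (half_gt0 e0).
exists (maxn N1 N2) => k hk.
have h1 := H1 k (leq_trans (leq_maxl _ _) hk).
have h2 := H2 k (leq_trans (leq_maxr _ _) hk).
have -> : u k + v k - (s + t) = (u k - s) + (v k - t) by rewrite opprD addrACA.
apply: (le_lt_trans (ler_normD _ _)).
by rewrite (splitr e); apply: ltrD.
Qed.

Lemma cconv_scale (u : nat -> C) s (c : C) : cconv u s ->
  cconv (fun k => c * u k) (c * s).
Proof.
move=> hs e e0.
have c1 : 0 < `|c| + 1 by rewrite ltr_wpDl.
have [N HN] := hs (e / (`|c| + 1)) (divr_gt0 e0 c1).
exists N => k /HN h.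
rewrite -mulrBr normrM.
apply: (le_lt_trans (y := `|c| * (e / (`|c| + 1)))).
  by rewrite ler_wpM2l // ltW.
rewrite mulrA ltr_pdivrMr // [X in X < _]mulrC ltr_pM2l //.
by rewrite ltrDl ltr01.
Qed.

Lemma cconv_const_sum (a : nat -> C) s (c : C) : cconv (fun k => \sum_(i < k) a i) s ->
  cconv (fun k => \sum_(i < k) (a i * c)) (s * c).
Proof.
move=> h; rewrite mulrC.
apply: (cconv_ext _ (cconv_scale c h)) => k.
by rewrite mulr_sumr; apply: eq_bigr => i _; rewrite mulrC.
Qed.
End Conv.
Section HilbertFacts.
Variables (R : realType) (V : lmodType R[i]) (ip : V -> V -> R[i]).
Hypothesis hH : hilbert ip.

Lemma hil_l : forall (a : R[i]) x y z, ip (a *: x + y) z = a * ip x z + ip y z.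
Proof. by case: hH. Qed.
Lemma hil_J : forall x y, ip x y = conjc (ip y x).
Proof. by case: hH. Qed.
Lemma hil_ge0 : forall x, 0 <= ip x x.
Proof. by case: hH. Qed.

Lemma vconv_ipl (u : nat -> V) l y : vconv ip u l -> cconv (fun k => ip (u k) y) (ip l y).
Proof.
move=> hu e e0.
set hy := sqrtC (ip y y).
have hy0 : 0 <= hy by rewrite sqrtC_ge0 hil_ge0.
have c1 : 0 < hy + 1 by rewrite ltr_wpDl.
have [N HN] := hu (e / (hy + 1)) (divr_gt0 e0 c1).
exists N => k /HN h.
rewrite -(ipBl hil_l).
apply: (le_lt_trans (CS hil_l hil_J hil_ge0 _ _)).
apply: (le_lt_trans (y := e / (hy + 1) * hy)).
  by rewrite ler_wpM2r // ltW.
rewrite mulrAC ltr_pdivrMr // ltr_pM2l //.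
by rewrite ltrDl ltr01.
Qed.
End HilbertFacts.
Section Schur.
Variable R : realType.
Local Notation C := R[i].

Definition herm (V : lmodType C) (ip : V -> V -> C) :=
  (forall (a : C) x y z, ip (a *: x + y) z = a * ip x z + ip y z) /\
  (forall x y, ip x y = conjc (ip y x)).
Definition psd (V : lmodType C) (ip : V -> V -> C) :=
  herm ip /\ forall x, 0 <= ip x x.

Definition GS (V1 V2 : lmodType C) (phi : V1 -> V1 -> C) (psi : V2 -> V2 -> C)
  k (x : 'I_k -> V1) (y : 'I_k -> V2) : C :=
  \sum_(i < k) \sum_(j < k) phi (x i) (x j) * psi (y i) (y j).

Lemma GS_drop (V1 V2 : lmodType C) (phi : V1 -> V1 -> C) (psi : V2 -> V2 -> C) k
  (x : 'I_k.+1 -> V1) (y : 'I_k.+1 -> V2) :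
  (forall z, psi (y ord_max) z = 0) -> (forall z, psi z (y ord_max) = 0) ->
  GS phi psi x y = GS phi psi (fun i => x (widen_ord (leqnSn k) i)) (fun i => y (widen_ord (leqnSn k) i)).
Proof.
move=> h1 h2; rewrite /GS big_ord_recr /=.
rewrite [X in _ + X = _]big1 ?addr0; last by move=> j _; rewrite h1 mulr0.
apply: eq_bigr => i _; rewrite big_ord_recr /= h2 mulr0 addr0 //.
Qed.

Lemma conj_real_ge0 (q : C) : 0 <= q -> conjc q = q.
Proof. by move=> /ge0_realC ->; rewrite conjc_real. Qed.

Lemma schur (V1 V2 : lmodType C) (phi : V1 -> V1 -> C) (psi : V2 -> V2 -> C) :
  psd phi -> psd psi -> forall k x y, 0 <= @GS V1 V2 phi psi k x y.
Proof.
move=> [[phl phJ] ph0] [[psl psJ] ps0].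
elim=> [|k IH] x y; first by rewrite /GS big_ord0.
set n := (@ord_max k).
set q := psi (y n) (y n).
have [q0|qn0] := eqVneq q 0.
  have v1 : forall z, psi z (y n) = 0 by move=> z; apply: (ip_vanish psl psJ ps0).
  have v2 : forall z, psi (y n) z = 0 by move=> z; rewrite psJ v1 conjc0.
  rewrite GS_drop //; exact: IH.
pose c i := psi (y i) (y n) / q.
pose y' i := y i - c i *: y n.
have Eq1 i : psi (y i) (y n) = c i * q by rewrite /c divfK.
have Eqc : conjc q = q by apply: conj_real_ge0; apply: ps0.
have Eq2 j : psi (y n) (y j) = conjc (c j) * q.
  by rewrite psJ Eq1 rmorphM /= Eqc.
have Ey i j : psi (y i) (y j) = psi (y' i) (y' j) + c i * conjc (c j) * q.
  rewrite /y' (ipBl psl) !(ipBr psl psJ) !(ipZl psl) !(ipZr psl psJ) Eq1 Eq2.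
  rewrite -/q; ring.
have Ey'n : y' n = 0 by rewrite /y' /c divff // scale1r subrr.
have E : GS phi psi x y = GS phi psi x y' +
   q * phi (\sum_(i < k.+1) c i *: x i) (\sum_(i < k.+1) c i *: x i).
  rewrite (ip_suml phl) mulr_sumr /GS -big_split /=; apply: eq_bigr => i _.
  rewrite (ip_sumr phl phJ) mulr_sumr -big_split /=; apply: eq_bigr => j _.
  rewrite (ipZl phl) (ipZr phl phJ) Ey; ring.
rewrite E; apply: addr_ge0; last by apply: mulr_ge0; [apply: ps0 | apply: ph0].
rewrite GS_drop; first exact: IH.
  by move=> z; rewrite Ey'n (ip0l psl).
by move=> z; rewrite Ey'n (ip0r psl psJ).
Qed.
End Schur.
Section Polar.
Variable R : realType.
Local Notation C := R[i].
Lemma polar (V : lmodType C) (b : V -> V -> C) :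
  (forall (a : C) x y z, b (a *: x + y) z = a * b x z + b y z) ->
  (forall (a : C) x y z, b z (a *: x + y) = conjc a * b z x + b z y) ->
  (forall x, complex.Im (b x x) = 0) -> forall x y, b x y = conjc (b y x).
Proof.
move=> bl br bI x y.
have E1 := bI (1 *: x + y). rewrite bl !br conjc1 !mul1r in E1.
have E2 := bI ('i *: y + x). rewrite bl !br in E2.
move: E1 E2 (bI x) (bI y).
case: (b x x) => a1 a2; case: (b x y) => b1 b2; case: (b y x) => c1 c2; case: (b y y) => d1 d2.
move=> /= h1 h2 h3 h4; congr Complex; lra.
Qed.
End Polar.
Section Comb.
Variable R : realType.
Local Notation C := R[i].
Lemma conjcB' (a b : C) : conjc (a - b) = conjc a - conjc b.
Proof. case: a => ? ?; case: b => ? ? /=; congr Complex; ring. Qed.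

Lemma herm_sub (V : lmodType C) (phi psi : V -> V -> C) (r : R) :
  herm phi -> herm psi -> herm (fun u v => phi u v - r%:C * psi u v).
Proof.
move=> [pl pJ] [sl sJ]; split.
  by move=> a x y z; rewrite pl sl; ring.
by move=> x y; rewrite conjcB' conjCs -pJ -sJ.
Qed.

Lemma herm_rsub (V : lmodType C) (phi psi : V -> V -> C) (r : R) :
  herm phi -> herm psi -> herm (fun u v => r%:C * psi u v - phi u v).
Proof.
move=> [pl pJ] [sl sJ]; split.
  by move=> a x y z; rewrite pl sl; ring.
by move=> x y; rewrite conjcB' conjCs -pJ -sJ.
Qed.

Lemma psd_sub (V : lmodType C) (phi psi : V -> V -> C) (r : R) :
  herm phi -> herm psi -> (forall x, r%:C * psi x x <= phi x x) ->
  psd (fun u v => phi u v - r%:C * psi u v).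
Proof. by move=> h1 h2 h3; split; [exact: herm_sub | move=> x; rewrite subr_ge0]. Qed.

Lemma psd_rsub (V : lmodType C) (phi psi : V -> V -> C) (r : R) :
  herm phi -> herm psi -> (forall x, phi x x <= r%:C * psi x x) ->
  psd (fun u v => r%:C * psi u v - phi u v).
Proof. by move=> h1 h2 h3; split; [exact: herm_rsub | move=> x; rewrite subr_ge0]. Qed.
End Comb.

Section FrameForm.
Variables (R : realType) (H HF : lmodType R[i]) (ipF : HF -> HF -> R[i]) (jF : H -> HF).
Variables (C1 : HF -> HF) (f : nat -> H) (A B : R) (S1 : HF -> HF).
Hypothesis hF : hilbert ipF.
Hypothesis hf : ctrl_frame ipF jF C1 f A B.
Hypothesis hS1 : frame_op ipF jF C1 f S1.

Let beta x y := ipF (S1 x) y.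

Lemma beta_lim x y : cconv (fun k => \sum_(i < k) ipF x (jF (f i)) * ipF (C1 (jF (f i))) y) (beta x y).
Proof.
apply: (cconv_ext _ (vconv_ipl hF y (hS1 x))) => k.
rewrite (ip_suml (hil_l hF)); apply: eq_bigr => i _; by rewrite (ipZl (hil_l hF)).
Qed.

Lemma beta_l (a : R[i]) x y z : beta (a *: x + y) z = a * beta x z + beta y z.
Proof.
apply: (cconv_uniq (beta_lim _ _)).
apply: (cconv_ext _ (cconv_add (cconv_scale a (beta_lim x z)) (beta_lim y z))) => k.
rewrite mulr_sumr -big_split; apply: eq_bigr => i _ /=; rewrite (hil_l hF); ring.
Qed.

Lemma beta_r (a : R[i]) x y z : beta z (a *: x + y) = conjc a * beta z x + beta z y.
Proof.
apply: (cconv_uniq (beta_lim _ _)).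
apply: (cconv_ext _ (cconv_add (cconv_scale (conjc a) (beta_lim z x)) (beta_lim z y))) => k.
rewrite mulr_sumr -big_split; apply: eq_bigr => i _ /=; rewrite (ipr (hil_l hF) (hil_J hF)); ring.
Qed.

Lemma beta_bounds x : A%:C * ipF x x <= beta x x /\ beta x x <= B%:C * ipF x x.
Proof.
case: hf => _ _ /(_ x) [s [hs h1 h2]].
have <- := cconv_uniq hs (beta_lim x x).
by rewrite /hnorm sqrtCK in h1 h2.
Qed.

Lemma beta_herm : herm beta.
Proof.
split; first exact: beta_l.
apply: polar; [exact: beta_l | exact: beta_r | move=> x].
have [h _] := beta_bounds x.
have [p Ep _] := ge0_ex (hil_ge0 hF x).
move: h; rewrite Ep -rmorphM lecE => /andP [/eqP -> _] //.
Qed.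

Lemma ipF_herm : herm ipF.
Proof. split; [exact: (hil_l hF) | exact: (hil_J hF)]. Qed.

Lemma ipF_psd : psd ipF.
Proof. split; [exact: ipF_herm | exact: (hil_ge0 hF)]. Qed.

Lemma A_ge0 : 0 <= A.
Proof. by case: hf => h _ _; exact: ltW. Qed.
Lemma B_ge0 : 0 <= B.
Proof. by case: hf => h1 h2 _; apply: le_trans h2; exact: ltW. Qed.

Lemma beta_psd : psd beta.
Proof.
split; first exact: beta_herm.
move=> x; have [h _] := beta_bounds x; apply: le_trans h.
by apply: mulr_ge0; [rewrite ler0c A_ge0 | exact: (hil_ge0 hF)].
Qed.

Lemma beta_lo_psd : psd (fun u v => beta u v - A%:C * ipF u v).
Proof. apply: psd_sub; [exact: beta_herm | exact: ipF_herm | move=> x; exact: (beta_bounds x).1]. Qed.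

Lemma beta_hi_psd : psd (fun u v => B%:C * ipF u v - beta u v).
Proof. apply: psd_rsub; [exact: beta_herm | exact: ipF_herm | move=> x; exact: (beta_bounds x).2]. Qed.
End FrameForm.
Section GSAlg.
Variable R : realType.
Local Notation C := R[i].
Lemma realCM (a c : R) : (a * c)%:C = a%:C * c%:C.
Proof. by apply/eqP; rewrite eq_complex /=; apply/andP; split; apply/eqP; ring. Qed.

Lemma GS_lower (V1 V2 : lmodType C) (phi phi0 : V1 -> V1 -> C) (psi psi0 : V2 -> V2 -> C)
  (a c : R) k x y :
  GS phi psi x y - (a * c)%:C * GS phi0 psi0 x y =
  GS (fun u v => phi u v - a%:C * phi0 u v) psi x y +
  a%:C * @GS _ V1 V2 phi0 (fun u v => psi u v - c%:C * psi0 u v) k x y.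
Proof.
rewrite /GS !mulr_sumr -sumrB -big_split; apply: eq_bigr => i _ /=.
rewrite !mulr_sumr -sumrB -big_split; apply: eq_bigr => j _ /=.
rewrite realCM; ring.
Qed.

Lemma GS_upper (V1 V2 : lmodType C) (phi phi0 : V1 -> V1 -> C) (psi psi0 : V2 -> V2 -> C)
  (b d : R) k x y :
  (b * d)%:C * GS phi0 psi0 x y - GS phi psi x y =
  GS (fun u v => b%:C * phi0 u v - phi u v) psi x y +
  b%:C * @GS _ V1 V2 phi0 (fun u v => d%:C * psi0 u v - psi u v) k x y.
Proof.
rewrite /GS !mulr_sumr -sumrB -big_split; apply: eq_bigr => i _ /=.
rewrite !mulr_sumr -sumrB -big_split; apply: eq_bigr => j _ /=.
rewrite realCM; ring.
Qed.

Lemma lin_sum (V : lmodType C) (T : V -> V) k (F : 'I_k -> V) :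
  linear_op T -> T (\sum_(i < k) F i) = \sum_(i < k) T (F i).
Proof.
move=> hT.
have hD u v : T (u + v) = T u + T v by rewrite -{1}(scale1r u) hT scale1r.
have h0 : T 0 = 0.
  have := hD 0 0; rewrite addr0 => h. by apply: (addrI (T 0)); rewrite addr0 -h.
exact: (big_morph T hD h0).
Qed.
End GSAlg.
Section Tensor.
Variables (R : realType) (H K HF KG W : lmodType R[i]).
Variables (ipF : HF -> HF -> R[i]) (ipG : KG -> KG -> R[i]) (ipW : W -> W -> R[i]).
Variables (jF : H -> HF) (jG : K -> KG) (t : HF -> KG -> W) (C1 : HF -> HF) (C2 : KG -> KG).
Variables (f : nat -> H) (g : nat -> K) (S1 : HF -> HF) (S2 : KG -> KG) (S12 : W -> W).
Variables (A B Cc Dd : R).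
Hypothesis hF : hilbert ipF.
Hypothesis hG : hilbert ipG.
Hypothesis hW : hilbert_tensor ipF ipG ipW t.
Hypothesis hf : ctrl_frame ipF jF C1 f A B.
Hypothesis hg : ctrl_frame ipG jG C2 g Cc Dd.
Hypothesis hS1 : frame_op ipF jF C1 f S1.
Hypothesis hS2 : frame_op ipG jG C2 g S2.
Hypothesis hS12 : tensor_frame_op ipF ipG ipW jF jG t C1 C2 f g S12.

Lemma hWh : hilbert ipW. Proof. by case: hW. Qed.
Lemma tip x x' y y' : ipW (t x y) (t x' y') = ipF x x' * ipG y y'. Proof. by case: hW. Qed.

Lemma S12_elem x y x' y' : ipW (S12 (t x y)) (t x' y') = ipF (S1 x) x' * ipG (S2 y) y'.
Proof.
case: hS12 => _ _ /(_ x y) [inner [hin hout]].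
set v := t x' y'.
have L1 := vconv_ipl hWh v hout.
have E2 i : ipW (inner i) v = (ipF x (jF (f i)) * ipF (C1 (jF (f i))) x') * ipG (S2 y) y'.
  apply: (cconv_uniq (vconv_ipl hWh v (hin i))).
  apply: (cconv_ext _ (cconv_scale (ipF x (jF (f i)) * ipF (C1 (jF (f i))) x') (beta_lim hG hS2 y y'))) => k.
  rewrite (ip_suml (hil_l hWh)) mulr_sumr; apply: eq_bigr => l _.
  rewrite (ipZl (hil_l hWh)) !tip /v; ring.
apply: (cconv_uniq L1).
apply: (cconv_ext _ (@cconv_const_sum _ (fun i => ipF x (jF (f i)) * ipF (C1 (jF (f i))) x') _ (ipG (S2 y) y') (beta_lim hF hS1 x x'))) => k.
rewrite (ip_suml (hil_l hWh)); apply: eq_bigr => i _; by rewrite E2.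
Qed.

Lemma S12_GS k (xs : 'I_k -> HF) (ys : 'I_k -> KG) :
  ipW (S12 (\sum_(i < k) t (xs i) (ys i))) (\sum_(i < k) t (xs i) (ys i)) =
  GS (fun u v => ipF (S1 u) v) (fun u v => ipG (S2 u) v) xs ys.
Proof.
case: hS12 => hlin _ _.
rewrite (lin_sum _ hlin) (ip_suml (hil_l hWh)); apply: eq_bigr => i _.
rewrite (ip_sumr (hil_l hWh) (hil_J hWh)); apply: eq_bigr => j _.
exact: S12_elem.
Qed.

Lemma W_GS k (xs : 'I_k -> HF) (ys : 'I_k -> KG) :
  ipW (\sum_(i < k) t (xs i) (ys i)) (\sum_(i < k) t (xs i) (ys i)) = GS ipF ipG xs ys.
Proof.
rewrite (ip_suml (hil_l hWh)); apply: eq_bigr => i _.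
rewrite (ip_sumr (hil_l hWh) (hil_J hWh)); apply: eq_bigr => j _.
exact: tip.
Qed.

Lemma finite_bound k (xs : 'I_k -> HF) (ys : 'I_k -> KG) :
  let w := \sum_(i < k) t (xs i) (ys i) in
  (A * Cc)%:C * ipW w w <= ipW (S12 w) w /\ ipW (S12 w) w <= (B * Dd)%:C * ipW w w.
Proof.
move=> w; rewrite /w S12_GS W_GS; split.
  rewrite -subr_ge0 GS_lower; apply: addr_ge0.
    apply: schur; [exact: (beta_lo_psd hF hf hS1) | exact: (beta_psd hG hg hS2)].
  apply: mulr_ge0; first by rewrite ler0c (A_ge0 hf).
  apply: schur; [exact: (ipF_psd hF) | exact: (beta_lo_psd hG hg hS2)].
rewrite -subr_ge0 GS_upper; apply: addr_ge0.
  apply: schur; [exact: (beta_hi_psd hF hf hS1) | exact: (beta_psd hG hg hS2)].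
apply: mulr_ge0; first by rewrite ler0c (B_ge0 hf).
apply: schur; [exact: (ipF_psd hF) | exact: (beta_hi_psd hG hg hS2)].
Qed.
End Tensor.
Section Approx.
Variable R : realType.
Local Notation C := R[i].

Lemma small_le0 (x K : R) : 0 <= K -> (forall d : R, 0 < d -> x <= K * d) -> x <= 0.
Proof.
move=> K0 h; rewrite leNgt; apply/negP => x0.
have K1 : 0 < K + 1 by lra.
have := h (x / (K + 1)) (divr_gt0 x0 K1).
have : K * (x / (K + 1)) < x.
  rewrite mulrA ltr_pdivrMr //; nra.
lra.
Qed.

Lemma normC_comp (a b d : R) : `|a +i* b| <= d%:C -> `|a| <= d /\ `|b| <= d.
Proof.
rewrite normc_def lecR /= => h; split; apply: le_trans h.
  rewrite -sqrtr_sqr; apply: ler_wsqrtr; rewrite lerDl; exact: sqr_ge0.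
rewrite -sqrtr_sqr; apply: ler_wsqrtr; rewrite lerDr; exact: sqr_ge0.
Qed.

Lemma approx (z p : C) (al be : R) : 0 <= p ->
  (forall d : R, 0 < d -> exists z' p', [/\ al%:C * p' <= z', z' <= be%:C * p', 0 <= p',
      `|z - z'| <= d%:C & `|p - p'| <= d%:C]) ->
  al%:C * p <= z /\ z <= be%:C * p.
Proof.
move=> /ge0_realC -> h.
case: z h => zr zi h.
set pr := complex.Re p.
have H d : 0 < d -> exists zr' pr', [/\ al * pr' <= zr', zr' <= be * pr',
   `|zr - zr'| <= d, `|zi| <= d & `|pr - pr'| <= d].
  move=> d0; have [z' [p' [h1 h2 h3 h4 h5]]] := h d d0.
  have [p'r Ep' _] := ge0_ex h3.
  move: h1 h2 h4 h5; rewrite Ep' -!realCM; case: z' => a b.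
  rewrite !lecE /= => /andP [/eqP b0 l1] /andP [_ l2].
  rewrite b0 subr0 => /normC_comp [n1 n2].
  move=> /andP [_]; rewrite -/pr subrr expr0n /= addr0 sqrtr_sqr => n3.
  by exists a, p'r.
have zi0 : zi = 0.
  apply/eqP; rewrite -normr_le0; apply: (small_le0 (K := 1)) => // d d0.
  by have [? [? [_ _ _ n _]]] := H d d0; rewrite mul1r.
rewrite -!realCM !lecE /= zi0 eqxx /=; split.
  rewrite -subr_le0; apply: (small_le0 (K := `|al| + 1)) => [|d d0]; first by rewrite addr_ge0.
  have [a [b [l1 l2 n1 _ n3]]] := H d d0.
  have : al * (pr - b) <= `|al| * d.
    apply: le_trans (ler_norm _) _; rewrite normrM; apply: ler_wpM2l => //.
  move: n1 n3 => /ler_normlP [n1 n1'] /ler_normlP [n3 n3'].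
  lra.
rewrite -subr_le0; apply: (small_le0 (K := `|be| + 1)) => [|d d0]; first by rewrite addr_ge0.
have [a [b [l1 l2 n1 _ n3]]] := H d d0.
have : be * (b - pr) <= `|be| * d.
  apply: le_trans (ler_norm _) _; rewrite normrM; apply: ler_wpM2l => //.
  by rewrite distrC.
move: n1 n3 => /ler_normlP [n1 n1'] /ler_normlP [n3 n3'].
lra.
Qed.
End Approx.
Section Err.
Variables (R : realType) (V : lmodType R[i]) (ip : V -> V -> R[i]).
Hypothesis hH : hilbert ip.
Variables (T : V -> V) (K : R).
Hypothesis hT : linear_op T.
Hypothesis hK : forall x, hnorm ip (T x) <= K%:C * hnorm ip x.

Lemma err w d : `|ip (T w) w - ip (T (w - d)) (w - d)| <=
  K%:C * hnorm ip d * (2 * hnorm ip w + hnorm ip d).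
Proof.
have hl := hil_l hH; have hJ := hil_J hH; have h0 := hil_ge0 hH.
have TB : T (w - d) = T w - T d.
  have -> : w - d = (-1) *: d + w by rewrite scaleN1r addrC.
  by rewrite hT scaleN1r addrC.
rewrite TB (ipBl hl) !(ipBr hl hJ).
have -> : ip (T w) w - (ip (T w) w - ip (T w) d - (ip (T d) w - ip (T d) d)) =
   ip (T w) d + ip (T d) w - ip (T d) d by ring.
have hn x : 0 <= hnorm ip x by rewrite /hnorm sqrtC_ge0.
have cs x y : `|ip x y| <= hnorm ip x * hnorm ip y by apply: (CS hl hJ h0).
apply: le_trans (ler_normB _ _) _.
apply: le_trans (lerD (ler_normD _ _) (lexx _)) _.
have e1 : `|ip (T w) d| <= K%:C * hnorm ip w * hnorm ip d.
  by apply: le_trans (cs _ _) _; apply: ler_wpM2r.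
have e2 : `|ip (T d) w| <= K%:C * hnorm ip d * hnorm ip w.
  by apply: le_trans (cs _ _) _; apply: ler_wpM2r.
have e3 : `|ip (T d) d| <= K%:C * hnorm ip d * hnorm ip d.
  by apply: le_trans (cs _ _) _; apply: ler_wpM2r.
apply: le_trans (lerD (lerD e1 e2) e3) _.
rewrite le_eqVlt; apply/orP; left; apply/eqP; ring.
Qed.
End Err.
Lemma realC2 (R : realType) : (2 : R)%:C = 2.
Proof. by rewrite rmorph_nat. Qed.
Lemma realCD (R : realType) (a b : R) : (a + b)%:C = a%:C + b%:C.
Proof. by rewrite rmorphD. Qed.

Lemma final_bound (R : realType) (K nwr ndr e d : R) : 1 <= K -> 0 <= nwr -> 0 <= ndr -> ndr < e -> e <= 1 ->
  e * (K * (2 * nwr + 1)) <= d -> K * ndr * (2 * nwr + ndr) <= d.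
Proof.
move=> K1 nw0 nd0 nde e1 ed.
have a1 : ndr * (2 * nwr + ndr) <= e * (2 * nwr + 1) by nra.
have a2 : K * (ndr * (2 * nwr + ndr)) <= K * (e * (2 * nwr + 1)).
  by apply: ler_wpM2l => //; lra.
apply: le_trans ed; move: a2; rewrite mulrA.
have -> : K * (e * (2 * nwr + 1)) = e * (K * (2 * nwr + 1)) by ring.
by [].
Qed.

Lemma err_C (R : realType) (K nw nd : R[i]) (Kr nwr ndr e d : R) : K = Kr%:C -> nw = nwr%:C -> nd = ndr%:C ->
  1 <= Kr -> 0 <= nwr -> 0 <= ndr -> nd < e%:C -> e <= 1 ->
  e * (Kr * (2 * nwr + 1)) <= d -> K * nd * (2 * nw + nd) <= d%:C.
Proof.
move=> -> -> -> K1 nw0 nd0; rewrite ltcR => nde e1 ed.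
have -> : Kr%:C * ndr%:C * (2 * nwr%:C + ndr%:C) = (Kr * ndr * (2 * nwr + ndr))%:C.
  have r1 : (1 : R)%:C = 1 by []. by rewrite !(realCM, realCD) r1.
rewrite lecR; exact: final_bound ed.
Qed.

Unset Implicit Arguments.

(* n = m.+1, so "n >= 2" is "0 < m"; a = (a_2,...,a_n), b = (b_2,...,b_n). *)
Theorem proposition4p6 (R : realType) (m : nat) (hm : (0 < m)%N)
  (H : lmodType R[i]) (ipH : H -> H -> m.-tuple H -> R[i]) (hH : n_hilbert ipH)
  (K : lmodType R[i]) (ipK : K -> K -> m.-tuple K -> R[i]) (hK : n_hilbert ipK)
  (a : m.-tuple H) (b : m.-tuple K)
  (HF : lmodType R[i]) (ipF : HF -> HF -> R[i]) (jF : H -> HF)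
  (hF : completion_of ipH a ipF jF)
  (KG : lmodType R[i]) (ipG : KG -> KG -> R[i]) (jG : K -> KG)
  (hG : completion_of ipK b ipG jG)
  (W : lmodType R[i]) (ipW : W -> W -> R[i]) (t : HF -> KG -> W)
  (hW : hilbert_tensor ipF ipG ipW t)
  (C1 : HF -> HF) (hC1 : GB ipF C1) (C2 : KG -> KG) (hC2 : GB ipG C2)
  (f : nat -> H) (A B : R) (hf : ctrl_frame ipF jF C1 f A B)
  (g : nat -> K) (Cc Dd : R) (hg : ctrl_frame ipG jG C2 g Cc Dd)
  (S1 : HF -> HF) (hS1 : frame_op ipF jF C1 f S1)
  (S2 : KG -> KG) (hS2 : frame_op ipG jG C2 g S2)
  (S12 : W -> W) (hS12 : tensor_frame_op ipF ipG ipW jF jG t C1 C2 f g S12) :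
  forall w : W,
    (A * Cc)%:C * ipW w w <= ipW (S12 w) w /\
    ipW (S12 w) w <= (B * Dd)%:C * ipW w w.
Proof.
move=> w.
have hW' := hWh hW.
have hF' : hilbert ipF by case: hF.
have hG' : hilbert ipG by case: hG.
have hn x : 0 <= hnorm ipW x by rewrite /hnorm sqrtC_ge0 (hil_ge0 hW').
have hS12' := hS12.
case: hS12' => hlin [M hM] _.
set Kr := `|M| + 1.
have K1 : 1 <= Kr by rewrite /Kr lerDr normr_ge0.
have hKS x : hnorm ipW (S12 x) <= Kr%:C * hnorm ipW x.
  apply: le_trans (hM x) _; apply: ler_wpM2r => //.
  rewrite lecR /Kr; have := ler_norm M; lra.
have hI x : hnorm ipW ((fun y : W => y) x) <= Kr%:C * hnorm ipW x.
  rewrite -{1}(mul1r (hnorm ipW x)); apply: ler_wpM2r => //.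
  by rewrite -(rmorph1 (real_complex R)) lecR.
have linI : linear_op (fun y : W => y) by [].
apply: approx; first exact: (hil_ge0 hW').
move=> d d0.
have [nwr Enw nw0] := ge0_ex (hn w).
have X0 : 0 < Kr * (2 * nwr + 1) by apply: mulr_gt0; lra.
set e := Order.min 1 (d / (Kr * (2 * nwr + 1))).
have e0 : 0 < e by rewrite lt_min ltr01 divr_gt0.
have [e1 e2] : e <= 1 /\ e <= d / (Kr * (2 * nwr + 1)).
  by have := lexx e; rewrite {2}/e le_min => /andP.
rewrite ler_pdivlMr // in e2.
have hW2 := hW; case: hW2 => _ _ _ _ /(_ w e%:C) []; first by rewrite ltcR.
move=> k [xs [ys hd]].
have [z1 z2] := finite_bound hF' hG' hW hf hg hS1 hS2 hS12 xs ys.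
set w' := \sum_(i < k) t (xs i) (ys i) in hd z1 z2 *.
have [ndr End nd0] := ge0_ex (hn (w - w')).
have Ew : w' = w - (w - w') by rewrite opprB addrC subrK.
exists (ipW (S12 w') w'), (ipW w' w'); split => //.
- exact: (hil_ge0 hW').
- rewrite {1 2}Ew; apply: le_trans (err hW' hlin hKS w (w - w')) _.
  exact: (err_C (Kr := Kr) (nwr := nwr) (ndr := ndr) (e := e)).
- rewrite {1 2}Ew; apply: le_trans (err hW' linI hI w (w - w')) _.
  exact: (err_C (Kr := Kr) (nwr := nwr) (ndr := ndr) (e := e)).
Qed.
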